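(* Let $k$ be a field and $n\ge2$. Put $A_0=I_n$, $A_i=x^i$ for $1\le i\le n-1$, $B_i=\sum_{j=1}^{n-i-1}jE_{j+1,i+j+1}$ for $0\le i\le n-2$, and $C=\sum_{j=1}^{n-1}jE_{j+1,j}$. Then $$N(\mathrm{J}_n(k))=\begin{cases}\bigoplus_{i=0}^{n-1}kA_i\oplus\bigoplus_{i=0}^{n-2}kB_i & (\mathrm{ch}(k)\nmid n),\\ \bigoplus_{i=0}^{n-1}kA_i\oplus\bigoplus_{i=0}^{n-2}kB_i\oplus kC & (\mathrm{ch}(k)\mid n).\end{cases}$$ In particular $\dim_kN(\mathrm{J}_n(k))=2n-1$ if $\mathrm{ch}(k)\nmid n$ and $2n$ if $\mathrm{ch}(k)\mid n$.
   Context: $x=E_{12}+E_{23}+\cdots+E_{n-1,n}\in\mathrm{M}_n(k)$, where $E_{ij}$ are matrix units, and $\mathrm{J}_n(k)$ is the $k$-subalgebra generated by $x$. For a subalgebra $A\subseteq\mathrm{M}_n(k)$, $N(A)=\{z\in\mathrm{M}_n(k)\mid zy-yz\in A\text{ for all }y\in A\}$. *)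

(* Defs.v *)
From HB Require Import structures.
From mathcomp Require Import all_boot all_order all_algebra.
Set Implicit Arguments. Unset Strict Implicit. Unset Printing Implicit Defensive.
Import GRing.Theory.
Local Open Scope ring_scope.

(* Matrices are indexed 0-based: the 1-based matrix unit E_{a,b} is the
   entry (a-1, b-1). *)

Definition xJ (k : fieldType) (n : nat) : 'M[k]_n :=
  \matrix_(r < n, c < n) ((r.+1 == c :> nat)%:R).

Definition inJ (k : fieldType) (n : nat) (y : 'M[k]_n) : Prop :=
  exists p : {poly k}, y = \sum_(i < size p) p`_i *: (xJ k n) ^+ i.

Definition normalizer (k : fieldType) (n : nat) (A : 'M[k]_n -> Prop)
  (z : 'M[k]_n) : Prop :=
  forall y, A y -> A (z * y - y * z).

Definition Amx (k : fieldType) (n i : nat) : 'M[k]_n := (xJ k n) ^+ i.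

(* B_i = sum_{j=1}^{n-i-1} j E_{j+1,i+j+1}; 0-based: entry (j, i+j) = j *)
Definition Bmx (k : fieldType) (n i : nat) : 'M[k]_n :=
  \matrix_(r < n, c < n) (if (1 <= r)%N && (c == i + r :> nat) then (r : nat)%:R else 0).

(* C = sum_{j=1}^{n-1} j E_{j+1,j}; 0-based: entry (j, j-1) = j *)
Definition Cmx (k : fieldType) (n : nat) : 'M[k]_n :=
  \matrix_(r < n, c < n) (if (r == c.+1 :> nat) then (r : nat)%:R else 0).

Definition char_dvd (k : fieldType) (n : nat) : Prop :=
  exists2 p : nat, p \in [pchar k] & (p %| n)%N.

Definition Nfamily (k : fieldType) (n : nat) (b : bool) : seq 'M[k]_n :=
  [seq Amx k n i | i <- iota 0 n] ++ [seq Bmx k n i | i <- iota 0 (n - 1)]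
  ++ (if b then [:: Cmx k n] else [::]).

(* Main.v *)
Require Import Defs.
From HB Require Import structures.
From mathcomp Require Import all_boot all_order all_algebra.
From mathcomp Require Import zify.
Import GRing.Theory.
Local Open Scope ring_scope.
Set Implicit Arguments. Unset Strict Implicit.

Lemma sum_delta (k : fieldType) (N a : nat) (F : nat -> k) :
  \sum_(i < N) (if (i : nat) == a then F i else 0) = if (a < N)%N then F a else 0.
Proof.
elim: N => [|N IH]; first by rewrite big_ord0.
rewrite big_ord_recr /= IH.
case: ifP => h1; case: eqP => h2; case: ifP => h3; rewrite ?addr0 ?add0r //;
  try (exfalso; lia).
by rewrite h2.
Qed.

Lemma xJE (k : fieldType) m (r c : 'I_m.+1) : xJ k m.+1 r c = ((r : nat).+1 == c)%:R.
Proof. by rewrite mxE. Qed.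

Lemma xpowE (k : fieldType) m j (r c : 'I_m.+1) :
  (xJ k m.+1 ^+ j) r c = ((c : nat) == r + j)%N%:R.
Proof.
elim: j r c => [|j IH] r c.
  by rewrite expr0 !mxE addn0 eq_sym.
rewrite exprSr -mulmxE mxE.
rewrite (eq_bigr (fun t : 'I_m.+1 => if (t : nat) == (r + j)%N then
    (((r + j).+1 == c)%:R : k) else 0)).
  rewrite (@sum_delta k m.+1 (r + j)%N (fun _ => ((r + j).+1 == c)%:R)); case: ifP => h; first by rewrite addnS eq_sym.
  by have -> : ((c : nat) == r + j.+1)%N = false by apply/negbTE; have := ltn_ord c; lia.
move=> t _; rewrite IH xJE; case: eqP => [->|_]; first by rewrite mul1r.
by rewrite mul0r.
Qed.


Lemma psumE (k : fieldType) m M (f : nat -> k) (r c : 'I_m.+1) :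
  (\sum_(i < M) f i *: xJ k m.+1 ^+ i) r c =
  if ((r <= c) && (c - r < M))%N then f (c - r)%N else 0.
Proof.
rewrite summxE.
rewrite (eq_bigr (fun i : 'I_M => if (i : nat) == (c - r)%N then
   (if (r <= c)%N then f i else 0) else 0)).
  rewrite (@sum_delta k M (c - r)%N (fun i => if (r <= c)%N then f i else 0)).
  by case: (r <= c)%N; case: ifP.
move=> i _; rewrite mxE xpowE.
case: (eqVneq (i : nat) (c - r)%N) => [e|ne].
  case: (leqP r c) => h.
    rewrite (_ : ((c : nat) == r + i)%N = true) ?mulr1 //; apply/eqP; lia.
  rewrite (_ : ((c : nat) == r + i)%N = false) ?mulr0 //; apply/negbTE/eqP; lia.
rewrite (_ : ((c : nat) == r + i)%N = false) ?mulr0 //; apply/negbTE/eqP; lia.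
Qed.

Definition Jsum (k : fieldType) m (f : nat -> k) : 'M[k]_m.+1 :=
  \sum_(i < m.+1) f i *: xJ k m.+1 ^+ i.
Arguments Jsum {k m} f.

Lemma JsumE (k : fieldType) m (f : nat -> k) (r c : 'I_m.+1) :
  Jsum f r c = if (r <= c)%N then f (c - r)%N else 0.
Proof.
rewrite /Jsum psumE; have := ltn_ord c; case: (r <= c)%N => //= h.
by rewrite (_ : (c - r < m.+1)%N) //; lia.
Qed.

Lemma xpow_ge (k : fieldType) m j : (m.+1 <= j)%N -> xJ k m.+1 ^+ j = 0.
Proof.
move=> h; apply/matrixP => r c; rewrite xpowE mxE.
by rewrite (_ : ((c : nat) == r + j)%N = false) //; have := ltn_ord c; lia.
Qed.

Lemma inJ_Jsum (k : fieldType) m (y : 'M[k]_m.+1) :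
  inJ y <-> exists f, y = Jsum f.
Proof.
split.
  move=> [p ->]; exists (fun i => p`_i); apply/matrixP => r c.
  rewrite [RHS]JsumE psumE; case: (r <= c)%N => //=; case: ifP => // h.
  by rewrite nth_default // leqNgt h.
move=> [f ->]; exists (\poly_(i < m.+1) f i); apply/matrixP => r c.
rewrite [LHS]JsumE psumE coef_poly; have := ltn_ord c; case: (r <= c)%N => //= hc.
rewrite (_ : (c - r < m.+1)%N); last by lia.
case: ifP => // h.
have hs : (size (\poly_(i < m.+1) f i) <= c - r)%N by rewrite leqNgt h.
have := nth_default 0 hs; rewrite coef_poly (_ : (c - r < m.+1)%N) //; lia.
Qed.


Lemma span_sumP (k : fieldType) m (s : seq 'M[k]_m.+1) v :
  v \in <<s>>%VS -> exists g : nat -> k, v = \sum_(i < size s) g i *: s`_i.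
Proof.
move=> /(coord_span (X := in_tuple s)) ->.
exists (fun j => oapp (fun i => coord (in_tuple s) i v) 0 (insub j)).
by apply: eq_bigr => i _; rewrite valK.
Qed.

Lemma sum_in_span (k : fieldType) m (s : seq 'M[k]_m.+1) (g : nat -> k) :
  \sum_(i < size s) g i *: s`_i \in <<s>>%VS.
Proof.
by apply: memv_suml => i _; apply: memvZ; apply: memv_span; apply: mem_nth.
Qed.

Definition Aseq (k : fieldType) m := [seq Amx k m.+1 i | i <- iota 0 m.+1].

Lemma Aseq_nth (k : fieldType) m i : (i < m.+1)%N -> (Aseq k m)`_i = xJ k m.+1 ^+ i.
Proof.
move=> h; rewrite /Aseq (nth_map 0%N) ?size_iota // nth_iota //.
Qed.

Lemma Jspace (k : fieldType) m (y : 'M[k]_m.+1) :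
  y \in <<Aseq k m>>%VS <-> exists f, y = Jsum f.
Proof.
split.
  move=> /span_sumP [g ->]; exists g.
  rewrite /Jsum -(big_mkord xpredT (fun i => g i *: (Aseq k m)`_i)).
  rewrite {1}/Aseq size_map size_iota big_mkord.
  by apply: eq_bigr => i _; rewrite Aseq_nth.
move=> [f ->]; apply: memv_suml => i _; apply: memvZ; apply: memv_span.
by rewrite -Aseq_nth //; apply: mem_nth; rewrite size_map size_iota.
Qed.

Lemma xpow_in (k : fieldType) m j : xJ k m.+1 ^+ j \in <<Aseq k m>>%VS.
Proof.
case: (ltnP j m.+1) => h.
  by apply: memv_span; rewrite -Aseq_nth //; apply: mem_nth; rewrite size_map size_iota.
by rewrite xpow_ge // mem0v.
Qed.

Lemma Jmul (k : fieldType) m (y : 'M[k]_m.+1) i : y \in <<Aseq k m>>%VS ->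
  (y * xJ k m.+1 ^+ i \in <<Aseq k m>>%VS) /\ (xJ k m.+1 ^+ i * y \in <<Aseq k m>>%VS).
Proof.
move=> /Jspace [f ->]; rewrite /Jsum mulr_suml mulr_sumr; split;
  apply: memv_suml => j _; [rewrite -scalerAl -exprD | rewrite -scalerAr -exprD];
  by apply: memvZ; apply: xpow_in.
Qed.


Definition comm (k : fieldType) m (z : 'M[k]_m.+1) := z * xJ k m.+1 - xJ k m.+1 * z.

Lemma mulX_E (k : fieldType) m (M : 'M[k]_m.+1) r (c : 'I_m.+1) :
  (M * xJ k m.+1) r c = if (0 < c)%N then M r (inord c.-1) else 0.
Proof.
rewrite -mulmxE mxE.
rewrite (eq_bigr (fun t : 'I_m.+1 => if (t : nat) == c.-1 then
   (if (0 < c)%N then M r (inord t) else 0) else 0)).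
  rewrite (@sum_delta k m.+1 c.-1 (fun t => if (0 < c)%N then M r (inord t) else 0)).
  by rewrite (_ : (c.-1 < m.+1)%N) //; have := ltn_ord c; lia.
move=> t _; rewrite xJE inord_val.
case: (eqVneq (t : nat) c.-1) => [e|ne].
  case: (posnP c) => h.
    by rewrite (_ : ((t : nat).+1 == c) = false) ?mulr0 //; apply/negbTE/eqP; lia.
  by rewrite (_ : ((t : nat).+1 == c) = true) ?mulr1 //; apply/eqP; lia.
by rewrite (_ : ((t : nat).+1 == c) = false) ?mulr0 //; apply/negbTE/eqP; lia.
Qed.

Lemma Xmul_E (k : fieldType) m (M : 'M[k]_m.+1) (r : 'I_m.+1) c :
  (xJ k m.+1 * M) r c = if (r.+1 < m.+1)%N then M (inord r.+1) c else 0.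
Proof.
rewrite -mulmxE mxE.
rewrite (eq_bigr (fun t : 'I_m.+1 => if (t : nat) == r.+1 then M (inord t) c else 0)).
  by rewrite (@sum_delta k m.+1 r.+1 (fun t => M (inord t) c)).
move=> t _; rewrite xJE inord_val.
case: (eqVneq (t : nat) r.+1) => [e|ne].
  by rewrite mul1r.
by rewrite mul0r.
Qed.

Lemma subE (k : fieldType) m (A B : 'M[k]_m.+1) r c : (A - B) r c = A r c - B r c.
Proof. by rewrite !mxE. Qed.
Lemma oppE (k : fieldType) m (A : 'M[k]_m.+1) r c : (- A) r c = - A r c.
Proof. by rewrite !mxE. Qed.

Lemma comm_sum (k : fieldType) m M (g : nat -> k) (s : nat -> 'M[k]_m.+1) :
  comm (\sum_(i < M) g i *: s i) = \sum_(i < M) g i *: comm (s i).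
Proof.
rewrite /comm mulr_suml mulr_sumr -sumrB; apply: eq_bigr => i _.
by rewrite scalerBr scalerAl scalerAr.
Qed.

Lemma commA (k : fieldType) m i : comm (xJ k m.+1 ^+ i) = 0.
Proof. by rewrite /comm -exprSr -exprS subrr. Qed.

Lemma commB (k : fieldType) m i : comm (Bmx k m.+1 i) = - xJ k m.+1 ^+ i.+1.
Proof.
apply/matrixP => r c; rewrite /comm subE oppE mulX_E Xmul_E xpowE.
rewrite /Bmx !mxE.
have hc := ltn_ord c; have hr := ltn_ord r.
case: (eqVneq (c : nat) (r + i.+1)%N) => [e|ne].
  have h0 : (0 < c)%N by lia.
  have h1 : (r.+1 < m.+1)%N by lia.
  rewrite h0 h1 !inordK //; try lia.
  have h2 : (c.-1 == i + r)%N by apply/eqP; lia.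
  have h3 : ((c : nat) == i + r.+1)%N by apply/eqP; lia.
  rewrite h2 h3 andbT /=.
  case: (posnP r) => [->|hp]; first by rewrite /= sub0r.
  by rewrite -natr1 opprD addrA subrr add0r.
rewrite /= oppr0.
have A : (0 < c)%N -> (((inord c.-1 : 'I_m.+1) : nat) == i + r)%N = false.
  by move=> h; rewrite inordK; [apply/negbTE/eqP; lia | lia].
have B : (r.+1 < m.+1)%N -> ((c : nat) == i + (inord r.+1 : 'I_m.+1))%N = false.
  by move=> h; rewrite inordK //; apply/negbTE/eqP; lia.
case: ifP => ha; first rewrite A // andbF.
  by case: ifP => hb; first rewrite B // andbF; rewrite subr0.
by case: ifP => hb; first rewrite B // andbF; rewrite subr0.
Qed.


Lemma commC (k : fieldType) m : (m.+1)%:R = 0 :> k -> comm (Cmx k m.+1) = - xJ k m.+1 ^+ 0.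
Proof.
move=> hN; apply/matrixP => r c.
rewrite /comm subE oppE mulX_E Xmul_E xpowE /Cmx !mxE addn0.
have hc := ltn_ord c; have hr := ltn_ord r.
have A : (0 < c)%N -> ((r : nat) == ((inord c.-1 : 'I_m.+1) : nat).+1) = ((r : nat) == c).
  by move=> h; rewrite inordK ?prednK //; lia.
have B : (r.+1 < m.+1)%N -> ((((inord r.+1 : 'I_m.+1) : nat) == c.+1) = ((r : nat) == c))
   /\ ((((inord r.+1 : 'I_m.+1) : nat))%:R = (r.+1)%:R :> k).
  by move=> h; rewrite inordK.
case: (eqVneq (c : nat) r) => [e|ne].
  case: (posnP r) => [r0|hp].
    have h1 : (0 < c)%N = false by lia.
    rewrite h1 sub0r.
    case: (posnP m) => [m0|mp].
      have h2 : (r.+1 < m.+1)%N = false by lia.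
      by rewrite h2 oppr0; move: hN; rewrite m0 /= => ->; rewrite oppr0.
    have h2 : (r.+1 < m.+1)%N by lia.
    by have [-> ->] := B h2; rewrite h2 e eqxx r0.
  have ec : ((r : nat) == c) = true by apply/eqP; lia.
  have h0 : (0 < c)%N by lia.
  rewrite h0 (A h0) ec /=.
  case: ifP => h.
    by have [-> ->] := B h; rewrite ec -natr1 opprD addrA subrr add0r.
  have em : (r : nat) = m by lia.
  by rewrite subr0 em; apply/eqP; rewrite -addr_eq0 natr1 hN.
rewrite /= oppr0.
have ne' : ((r : nat) == c) = false by rewrite eq_sym; apply/negbTE.
have X2 : (if (r.+1 < m.+1)%N then if ((inord r.+1 : 'I_m.+1) : nat) == c.+1
    then ((inord r.+1 : 'I_m.+1) : nat)%:R else 0 else 0) = 0 :> k.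
  by case: ifP => h2 //; have [-> _] := B h2; rewrite ne'.
rewrite X2 subr0; case: ifP => h1 //.
by rewrite (A h1) ne'.
Qed.


Lemma comm_pow (k : fieldType) m (z : 'M[k]_m.+1) i :
  comm z \in <<Aseq k m>>%VS ->
  z * xJ k m.+1 ^+ i - xJ k m.+1 ^+ i * z \in <<Aseq k m>>%VS.
Proof.
move=> hz; elim: i => [|i IH]; first by rewrite !expr0 mulr1 mul1r subrr mem0v.
have -> : z * xJ k m.+1 ^+ i.+1 - xJ k m.+1 ^+ i.+1 * z =
  (z * xJ k m.+1 ^+ i - xJ k m.+1 ^+ i * z) * xJ k m.+1 ^+ 1
  + xJ k m.+1 ^+ i * comm z.
  by rewrite /comm expr1 exprSr mulrBl mulrBr !mulrA addrA subrK.
by apply: memvD; [case: (Jmul 1 IH) | case: (Jmul i hz)].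
Qed.

Lemma normalizerP (k : fieldType) m (z : 'M[k]_m.+1) :
  normalizer (@inJ k m.+1) z <-> comm z \in <<Aseq k m>>%VS.
Proof.
split.
  move=> h; apply/Jspace/inJ_Jsum; apply: h.
  apply/inJ_Jsum; exists (fun i => (i == 1)%:R); apply/matrixP => r c.
  rewrite JsumE xJE; case: (leqP r c) => h.
    by congr (_ %:R); apply/eqP/eqP; lia.
  by rewrite (_ : ((r : nat).+1 == c) = false) //; apply/negbTE/eqP; lia.
move=> hz y /inJ_Jsum [f ->]; apply/inJ_Jsum/Jspace.
rewrite /Jsum mulr_sumr mulr_suml -sumrB; apply: memv_suml => i _.
by rewrite -scalerAr -scalerAl -scalerBr; apply: memvZ; apply: comm_pow.
Qed.

Lemma centralizer (k : fieldType) m (w : 'M[k]_m.+1) :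
  comm w = 0 -> w = Jsum (fun j => w ord0 (inord j)).
Proof.
move=> /eqP; rewrite /comm subr_eq0 => /eqP hw.
have key : forall r, (r < m.+1)%N -> forall c : 'I_m.+1,
    w (inord r) c = if (r <= c)%N then w ord0 (inord (c - r)) else 0.
  elim=> [|r IH] hr c.
    rewrite subn0 inord_val /=; congr (w _ c); apply: val_inj; rewrite /= inordK //.
  have := congr1 (fun M : 'M[k]_m.+1 => M (inord r) c) hw.
  rewrite mulX_E Xmul_E inordK ?(ltnW hr) // hr => <-.
  case: (posnP c) => [c0|cp]; first by rewrite c0.
  rewrite IH ?(ltnW hr) // inordK; last by have := ltn_ord c; lia.
  have -> : (r <= c.-1)%N = (r < c)%N by lia.
  by rewrite (_ : (c.-1 - r = c - r.+1)%N) //; lia.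
apply/matrixP => r c; rewrite JsumE -key ?inord_val //.
Qed.


Lemma comm_trace (k : fieldType) m (z : 'M[k]_m.+1) f :
  comm z = Jsum f -> (m.+1)%:R * f 0%N = 0.
Proof.
move=> h.
have t0 : \tr (comm z) = 0.
  by rewrite /comm raddfB /= -!mulmxE mxtrace_mulC subrr.
rewrite h /mxtrace in t0; rewrite -t0.
rewrite (eq_bigr (fun _ => f 0%N)); last by move=> i _; rewrite JsumE leqnn subnn.
by rewrite sumr_const card_ord mulr_natl.
Qed.


Lemma BsumE (k : fieldType) m (b : nat -> k) (r c : 'I_m.+2) :
  (\sum_(i < m.+1) b i *: Bmx k m.+2 i) r c =
  if ((1 <= r) && (r <= c))%N then b (c - r)%N * (r : nat)%:R else 0.
Proof.
rewrite summxE.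
rewrite (eq_bigr (fun i : 'I_m.+1 => if (i : nat) == (c - r)%N then
   (if ((1 <= r) && (r <= c))%N then b i * (r : nat)%:R else 0) else 0)).
  rewrite (@sum_delta k m.+1 (c - r)%N (fun i => if ((1 <= r) && (r <= c))%N then b i * (r : nat)%:R else 0)).
  case: ifP => // h; case: ifP => // h2; exfalso; move: h h2; have := ltn_ord c; lia.
move=> i _; rewrite !mxE.
case: (eqVneq (i : nat) (c - r)%N) => [e|ne].
  case: (leqP 1 r) => h1 /=; last by rewrite mulr0.
  case: (leqP r c) => h2.
    by rewrite (_ : ((c : nat) == i + r)%N = true) //; apply/eqP; lia.
  by rewrite (_ : ((c : nat) == i + r)%N = false) ?mulr0 //; apply/negbTE/eqP; lia.
by rewrite (_ : ((c : nat) == i + r)%N = false) ?andbF ?mulr0 //; apply/negbTE/eqP; lia.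
Qed.

Lemma indep (k : fieldType) m (a b : nat -> k) (c : k) :
  \sum_(i < m.+2) a i *: xJ k m.+2 ^+ i + \sum_(i < m.+1) b i *: Bmx k m.+2 i
  + c *: Cmx k m.+2 = 0 ->
  (forall i, (i < m.+2)%N -> a i = 0) /\ (forall i, (i < m.+1)%N -> b i = 0) /\ c = 0.
Proof.
move=> h.
have E : forall r c0 : 'I_m.+2,
  (if (r <= c0)%N then a (c0 - r)%N else 0) +
  (if ((1 <= r) && (r <= c0))%N then b (c0 - r)%N * (r : nat)%:R else 0) +
  c * (if (r : nat) == c0.+1 then (r : nat)%:R else 0) = 0.
  move=> r c0; have := congr1 (fun M : 'M[k]_m.+2 => M r c0) h.
  by rewrite !mxE -[\sum_(i < m.+2) _](_ : Jsum a = _) // JsumE BsumE.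
have ha : forall i, (i < m.+2)%N -> a i = 0.
  move=> i hi; have := E ord0 (inord i); rewrite /= inordK // subn0 addr0.
  by rewrite mulr0 addr0.
split=> //.
have hb : forall i, (i < m.+1)%N -> b i = 0.
  move=> i hi; have := E (inord 1) (inord i.+1); rewrite !inordK //.
  rewrite /= subn1 /= ha ?add0r; last lia.
  by rewrite mulr1 mulr0 addr0.
split=> //.
have := E (inord 1) ord0; rewrite !inordK //= mulr1 !add0r //.
Qed.


Lemma sum_cat (k : fieldType) m (s1 s2 : seq 'M[k]_m.+1) (g : nat -> k) :
  \sum_(i < size (s1 ++ s2)) g i *: (s1 ++ s2)`_i =
  \sum_(i < size s1) g i *: s1`_i + \sum_(i < size s2) g (size s1 + i)%N *: s2`_i.
Proof.
rewrite -(big_mkord xpredT (fun i => g i *: (s1 ++ s2)`_i)) size_cat.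
rewrite big_mkord big_split_ord /=; congr (_ + _); apply: eq_bigr => i _.
  by rewrite nth_cat /= ltn_ord.
by rewrite nth_cat /= ltnNge leq_addr /= addKn.
Qed.

Lemma Nfam_free (k : fieldType) m (bb : bool) : free (Nfamily k m.+2 bb).
Proof.
apply/(freeP (X := in_tuple (Nfamily k m.+2 bb))) => K hK i.
set g := fun j => oapp K 0 (insub j).
have hg : \sum_(j < size (Nfamily k m.+2 bb)) g j *: (Nfamily k m.+2 bb)`_j = 0.
  by rewrite -[RHS]hK; apply: eq_bigr => j _; rewrite /g valK.
have -> : K i = g i by rewrite /g valK.
have hi := ltn_ord i; move: (nat_of_ord i) hi => j hj.
move: hg hj; clearbody g; clear hK i K.
rewrite /Nfamily sum_cat size_map size_iota.
rewrite (sum_cat _ _ (fun i => g (m.+2 + i)%N)) size_map size_iota.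
rewrite !size_cat !size_map !size_iota subn1 /=.
have eA : forall j : 'I_m.+2, [seq Amx k m.+2 i | i <- iota 0 m.+2]`_j = xJ k m.+2 ^+ j.
  by move=> j'; rewrite (nth_map 0%N) ?size_iota // nth_iota.
have eB : forall j : 'I_m.+1, [seq Bmx k m.+2 i | i <- iota 0 m.+1]`_j = Bmx k m.+2 j.
  by move=> j'; rewrite (nth_map 0%N) ?size_iota // nth_iota.
under eq_bigr => j' _ do rewrite eA.
under [X in _ + (X + _)]eq_bigr => j' _ do rewrite eB.
rewrite addrA.
case: bb => /=.
  rewrite big_ord1 /= => h hj.
  have [ha [hb hc]] := @indep k m g (fun i => g (m.+2 + i)%N) _ h.
  case: (ltnP j m.+2) => h1; first exact: ha.
  case: (ltnP j (m.+2 + m.+1)) => h2.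
    have -> : j = (m.+2 + (j - m.+2))%N by lia.
    by apply: hb; lia.
  by have -> : j = (m.+2 + (m.+1 + 0))%N by lia.
rewrite big_ord0 addr0 => h hj.
have h' : \sum_(i < m.+2) g i *: xJ k m.+2 ^+ i
   + \sum_(i < m.+1) g (m.+2 + i)%N *: Bmx k m.+2 i + 0 *: Cmx k m.+2 = 0.
  by rewrite scale0r addr0.
have [ha [hb _]] := @indep k m g (fun i => g (m.+2 + i)%N) _ h'.
case: (ltnP j m.+2) => h1; first exact: ha.
have -> : j = (m.+2 + (j - m.+2))%N by lia.
by apply: hb; lia.
Qed.


Lemma commD (k : fieldType) m (a b : 'M[k]_m.+1) : comm (a + b) = comm a + comm b.
Proof.
rewrite /comm mulrDl mulrDr opprD !addrA; congr (_ + _).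
by rewrite -!addrA; congr (_ + _); rewrite addrC.
Qed.

Lemma commZ (k : fieldType) m c (a : 'M[k]_m.+1) : comm (c *: a) = c *: comm a.
Proof. by rewrite /comm scalerBr scalerAl scalerAr. Qed.

Lemma main_mem (k : fieldType) m (bb : bool)
  (hb : bb = true <-> (m.+2)%:R = 0 :> k) (z : 'M[k]_m.+2) :
  normalizer (@inJ k m.+2) z <-> z \in <<Nfamily k m.+2 bb>>%VS.
Proof.
have sA : forall y, y \in <<Aseq k m.+1>>%VS -> y \in <<Nfamily k m.+2 bb>>%VS.
  move=> y; apply/subvP/sub_span => v hv; rewrite /Nfamily mem_cat.
  by rewrite /Aseq in hv; rewrite hv.
have sB : forall i, (i < m.+1)%N -> Bmx k m.+2 i \in <<Nfamily k m.+2 bb>>%VS.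
  move=> i hi; apply: memv_span; rewrite /Nfamily !mem_cat; apply/orP; right.
  by apply/orP; left; apply: map_f; rewrite mem_iota subn1 /=.
have sC : bb -> Cmx k m.+2 \in <<Nfamily k m.+2 bb>>%VS.
  move=> b1; apply: memv_span; rewrite /Nfamily !mem_cat b1.
  by rewrite mem_seq1 eqxx !orbT.
rewrite normalizerP; split.
  move=> /Jspace [f hf].
  set S := \sum_(i < m.+1) f i.+1 *: Bmx k m.+2 i.
  have cS : comm z + comm S = f 0%N *: xJ k m.+2 ^+ 0.
    rewrite hf /Jsum big_ord_recl /S (@comm_sum k m.+1 m.+1 (fun i => f i.+1) (fun i => Bmx k m.+2 i)).
    under [X in _ + X]eq_bigr => i _ do rewrite commB scalerN.
    rewrite sumrN -addrA.
    rewrite [X in _ + (X - _)](_ : _ = \sum_(i < m.+1) f i.+1 *: xJ k m.+2 ^+ i.+1).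
      by rewrite subrr addr0.
    by apply: eq_bigr.
  have SN : S \in <<Nfamily k m.+2 bb>>%VS.
    by apply: memv_suml => i _; apply: memvZ; apply: sB.
  move: hb sA sB sC SN; case: bb => hb sA sB sC SN.
    have hN : (m.+2)%:R = 0 :> k by apply/hb.
    have hw : comm (z + S + f 0%N *: Cmx k m.+2) = 0.
      by rewrite !commD commZ cS commC // scalerN subrr.
    have := centralizer hw => /(fun e => e) hw'.
    have wJ : z + S + f 0%N *: Cmx k m.+2 \in <<Aseq k m.+1>>%VS.
      by apply/Jspace; eexists; exact hw'.
    have -> : z = z + S + f 0%N *: Cmx k m.+2 - f 0%N *: Cmx k m.+2 - S.
      by rewrite addrK addrK.
    by apply: memvB; [apply: memvB; [apply: sA | apply: memvZ; apply: sC] | ].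
  have f0 : f 0%N = 0.
    have := comm_trace hf; move/eqP; rewrite mulf_eq0 => /orP [/eqP h|/eqP //].
    by have := proj2 hb h.
  have hw : comm (z + S) = 0 by rewrite commD cS f0 scale0r.
  have wJ : z + S \in <<Aseq k m.+1>>%VS.
    by apply/Jspace; eexists; exact (centralizer hw).
  have -> : z = z + S - S by rewrite addrK.
  by apply: memvB => //; apply: sA.
move=> /span_sumP [g ->].
rewrite (@comm_sum k m.+1 (size (Nfamily k m.+2 bb)) g (fun i => (Nfamily k m.+2 bb)`_i)).
apply: memv_suml => i _; apply: memvZ.
have : (Nfamily k m.+2 bb)`_i \in Nfamily k m.+2 bb by apply: mem_nth.
move: ((Nfamily k m.+2 bb)`_i) => v; clear i g.
rewrite /Nfamily !mem_cat => /or3P [/mapP [j _ ->]|/mapP [j _ ->]|].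
- by rewrite /Amx commA mem0v.
- by rewrite commB memvN xpow_in.
move: hb sA sB sC; case: bb => hb _ _ _ //=; rewrite inE => /eqP ->.
by rewrite commC ?memvN ?xpow_in //; apply/hb.
Qed.


Lemma char_dvdE (k : fieldType) n : (0 < n)%N -> char_dvd k n <-> n%:R = 0 :> k.
Proof.
move=> hn; split.
  by move=> [p hp hd]; apply/eqP; rewrite -(dvdn_pcharf hp).
move=> /eqP h; have [p hp] := natf0_pchar hn h.
by exists p => //; rewrite (dvdn_pcharf hp).
Qed.

Unset Implicit Arguments.

Theorem proposition4p21 (k : fieldType) (n : nat) (hn : (2 <= n)%N) :
  (~ char_dvd k n ->
     (forall z : 'M[k]_n, normalizer (@inJ k n) z <-> z \in <<Nfamily k n false>>%VS)
     /\ free (Nfamily k n false)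
     /\ \dim <<Nfamily k n false>>%VS = (2 * n - 1)%N) /\
  (char_dvd k n ->
     (forall z : 'M[k]_n, normalizer (@inJ k n) z <-> z \in <<Nfamily k n true>>%VS)
     /\ free (Nfamily k n true)
     /\ \dim <<Nfamily k n true>>%VS = (2 * n)%N).
Proof.
case: n hn => [|[|m]] // _.
have hc := @char_dvdE k m.+2 isT.
split => hd.
  split; first by move=> z; apply: main_mem; split => // h; exfalso; apply: hd; apply/hc.
  split; first exact: Nfam_free.
  rewrite (eqP (Nfam_free k m false)) /Nfamily !size_cat !size_map !size_iota /=; lia.
split; first by move=> z; apply: main_mem; split => // _; apply/hc.
split; first exact: Nfam_free.
rewrite (eqP (Nfam_free k m true)) /Nfamily !size_cat !size_map !size_iota /=; lia.
Qed.
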